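(* Let $u(x,t)$ be the solution of the time-space fractional convection-diffusion problem below, and $\{u^j_i\}$ the solution of the implicit difference scheme below, with $N\ge5$ and $d_+(t)+d_-(t)\ge d_*>0$ on $[0,T]$. Assume $u$ is smooth enough (e.g. $u\in\mathcal C^{4,3}_{x,t}$ with the regularity required for the consistency estimates) that the local truncation error $R^{j+\sigma}_i:=\Delta^\alpha_{0,t_{j+\sigma}}u(x_i,\cdot)-(\delta^{\beta,(j)}_h u^{(\sigma)}_{\mathrm{ex}})_i-f^{j+\sigma}_i$, where $u^{(\sigma)}_{\mathrm{ex},i}=\sigma u(x_i,t_{j+1})+(1-\sigma)u(x_i,t_j)$, satisfies $|R^{j+\sigma}_i|\le C_R(\tau^2+h^2)$ for all $i,j$, with $C_R$ independent of $h,\tau$. Let $E^j_i=u(x_i,t_j)-u^j_i$. Then there is a constant $\tilde c>0$ independent of $h$ and $\tau$ such that \[ \|E^j\|\le \tilde c(\tau^2+h^2),\qquad 0\le j\le M. \]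
   Context: The continuous problem: for $0<\alpha<1$, $1<\beta<2$, $a<x<b$, $0<t\le T$, $\partial^\alpha_{0,t}u=\gamma(t)\partial_xu+d_+(t)\,{}_aD^\beta_xu+d_-(t)\,{}_xD^\beta_bu+f(x,t)$, $u(x,0)=\phi(x)$, $u(a,t)=u(b,t)=0$, where $\partial^\alpha_{0,t}u=\frac{1}{\Gamma(1-\alpha)}\int_0^t\partial_\xi u(x,\xi)(t-\xi)^{-\alpha}d\xi$ (Caputo), ${}_aD^\beta_xu=\frac{1}{\Gamma(2-\beta)}\partial_x^2\int_a^x u(\eta,t)(x-\eta)^{1-\beta}d\eta$, ${}_xD^\beta_bu=\frac{1}{\Gamma(2-\beta)}\partial_x^2\int_x^b u(\eta,t)(\eta-x)^{1-\beta}d\eta$ (Riemann–Liouville); $\gamma$ real, $d_\pm\ge0$. Grids: $h=(b-a)/N$, $x_i=a+ih$, $\tau=T/M$, $t_j=j\tau$, $\sigma=1-\alpha/2$, $t_{j+\sigma}=(j+\sigma)\tau$. $\|\bm v\|^2=h\sum_{i=1}^{N-1}v_i^2$. Time discretization: $a_0=\sigma^{1-\alpha}$, $a_\ell=(\ell+\sigma)^{1-\alpha}-(\ell-1+\sigma)^{1-\alpha}$ ($\ell\ge1$), $b_\ell=\frac{1}{2-\alpha}[(\ell+\sigma)^{2-\alpha}-(\ell-1+\sigma)^{2-\alpha}]-\frac12[(\ell+\sigma)^{1-\alpha}+(\ell-1+\sigma)^{1-\alpha}]$; $c^{(0)}_0=a_0$; for $j\ge1$: $c^{(j)}_0=a_0+b_1$,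 $c^{(j)}_m=a_m+b_{m+1}-b_m$ ($1\le m\le j-1$), $c^{(j)}_j=a_j-b_j$; $\Delta^\alpha_{0,t_{j+\sigma}}u=\frac{\tau^{-\alpha}}{\Gamma(2-\alpha)}\sum_{s=0}^jc^{(j)}_{j-s}(u^{s+1}-u^s)$. Space discretization: $g_k=(-1)^k\binom{\beta}{k}$, $\lambda_1=\frac{\beta^2+3\beta+2}{12}$, $\lambda_0=\frac{4-\beta^2}{6}$, $\lambda_{-1}=\frac{\beta^2-3\beta+2}{12}$, $\omega_0=\lambda_1g_0$, $\omega_1=\lambda_1g_1+\lambda_0g_0$, $\omega_k=\lambda_1g_k+\lambda_0g_{k-1}+\lambda_{-1}g_{k-2}$ ($k\ge2$); for a grid function $\bm v$ with $v_0=v_N=0$: $(\delta^{\beta,(j)}_h\bm v)_i=\gamma(t_{j+\sigma})\frac{v_{i+1}-v_{i-1}}{2h}+\frac{d_+(t_{j+\sigma})}{h^\beta}\sum_{k=0}^{i+1}\omega_kv_{i-k+1}+\frac{d_-(t_{j+\sigma})}{h^\beta}\sum_{k=0}^{N-i+1}\omega_kv_{i+k-1}$. Scheme: $\Delta^\alpha_{0,t_{j+\sigma}}u_i=(\delta^{\beta,(j)}_hu^{(\sigma)})_i+f(x_i,t_{j+\sigma})$ ($1\le i\le N-1$, $0\le j\le M-1$), $u^{(\sigma)}_i=\sigma u^{j+1}_i+(1-\sigma)u^j_i$, $u^0_i=\phi(x_i)$, $u^j_0=u^j_N=0$. *)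

(* Defs.v *)
From Stdlib Require Import Reals Lra Lia Arith Factorial.
Open Scope R_scope.

Fixpoint sumR (n : nat) (f : nat -> R) : R :=
  match n with O => 0 | S n' => sumR n' f + f n' end.
Fixpoint prodR (n : nat) (f : nat -> R) : R :=
  match n with O => 1 | S n' => prodR n' f * f n' end.

Definition improper_int (g : R -> R) (c d I : R) : Prop :=
  forall eps, 0 < eps -> exists del, 0 < del /\
    forall c' d', c < c' < c + del -> d - del < d' < d -> c' < d' ->
      exists pr : Riemann_integrable g c' d', Rabs (RiemannInt pr - I) < eps.

Definition improper_int_0_inf (g : R -> R) (I : R) : Prop :=
  forall eps, 0 < eps -> exists del L, 0 < del /\
    forall c' d', 0 < c' < del -> L < d' -> c' < d' ->
      exists pr : Riemann_integrable g c' d', Rabs (RiemannInt pr - I) < eps.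

Definition is_Gamma (z G : R) : Prop :=
  improper_int_0_inf (fun s => Rpower s (z - 1) * exp (- s)) G.

Definition is_caputo (alpha : R) (w : R -> R) (t D : R) : Prop :=
  exists (G : R) (dw : R -> R) (I : R),
    is_Gamma (1 - alpha) G /\
    (forall xi, 0 < xi < t -> derivable_pt_lim w xi (dw xi)) /\
    improper_int (fun xi => dw xi * Rpower (t - xi) (- alpha)) 0 t I /\
    D = I / G.

Definition is_RL_left (beta : R) (w : R -> R) (a b x D : R) : Prop :=
  exists (G : R) (F F' : R -> R) (F2 : R),
    is_Gamma (2 - beta) G /\
    (forall y, a < y < b ->
       improper_int (fun eta => w eta * Rpower (y - eta) (1 - beta)) a y (F y)) /\
    (forall y, a < y < b -> derivable_pt_lim F y (F' y)) /\
    derivable_pt_lim F' x F2 /\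
    D = F2 / G.

Definition is_RL_right (beta : R) (w : R -> R) (a b x D : R) : Prop :=
  exists (G : R) (F F' : R -> R) (F2 : R),
    is_Gamma (2 - beta) G /\
    (forall y, a < y < b ->
       improper_int (fun eta => w eta * Rpower (eta - y) (1 - beta)) y b (F y)) /\
    (forall y, a < y < b -> derivable_pt_lim F y (F' y)) /\
    derivable_pt_lim F' x F2 /\
    D = F2 / G.

Definition solves_problem (alpha beta a b T : R) (gam dp dm : R -> R)
    (f : R -> R -> R) (phi : R -> R) (u : R -> R -> R) : Prop :=
  (forall x, a < x < b -> u x 0 = phi x) /\
  (forall t, 0 <= t <= T -> u a t = 0 /\ u b t = 0) /\
  (forall x t, a < x < b -> 0 < t <= T ->
     exists Dc ux Dl Dr,
       is_caputo alpha (fun s => u x s) t Dc /\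
       derivable_pt_lim (fun y => u y t) x ux /\
       is_RL_left beta (fun y => u y t) a b x Dl /\
       is_RL_right beta (fun y => u y t) a b x Dr /\
       Dc = gam t * ux + dp t * Dl + dm t * Dr + f x t).

Definition sig (alpha : R) : R := 1 - alpha / 2.

Definition acoef (alpha : R) (l : nat) : R :=
  match l with
  | O => Rpower (sig alpha) (1 - alpha)
  | S _ => Rpower (INR l + sig alpha) (1 - alpha)
           - Rpower (INR l - 1 + sig alpha) (1 - alpha)
  end.

Definition bcoef (alpha : R) (l : nat) : R :=
  / (2 - alpha) * (Rpower (INR l + sig alpha) (2 - alpha)
                   - Rpower (INR l - 1 + sig alpha) (2 - alpha))
  - / 2 * (Rpower (INR l + sig alpha) (1 - alpha)
           + Rpower (INR l - 1 + sig alpha) (1 - alpha)).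

(* c^{(j)}_m, meaningful for 0 <= m <= j *)
Definition ccoef (alpha : R) (j m : nat) : R :=
  match j with
  | O => acoef alpha 0
  | S _ =>
      if Nat.eqb m 0 then acoef alpha 0 + bcoef alpha 1
      else if Nat.ltb m j then acoef alpha m + bcoef alpha (S m) - bcoef alpha m
      else acoef alpha j - bcoef alpha j
  end.

(* Delta^alpha_{0,t_{j+sigma}} v, with G2 = Gamma(2-alpha) *)
Definition Delta_t (alpha tau G2 : R) (j : nat) (v : nat -> R) : R :=
  Rpower tau (- alpha) / G2 *
  sumR (S j) (fun s => ccoef alpha j (j - s) * (v (S s) - v s)).

Definition gbinom (beta : R) (k : nat) : R :=
  prodR k (fun m => beta - INR m) / INR (fact k).
Definition gk (beta : R) (k : nat) : R := (-1) ^ k * gbinom beta k.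

Definition lam1 (beta : R) : R := (beta ^ 2 + 3 * beta + 2) / 12.
Definition lam0 (beta : R) : R := (4 - beta ^ 2) / 6.
Definition lamm1 (beta : R) : R := (beta ^ 2 - 3 * beta + 2) / 12.

Definition omega (beta : R) (k : nat) : R :=
  match k with
  | O => lam1 beta * gk beta 0
  | S O => lam1 beta * gk beta 1 + lam0 beta * gk beta 0
  | S (S k') => lam1 beta * gk beta k + lam0 beta * gk beta (S k')
                + lamm1 beta * gk beta k'
  end.

Definition hstep (a b : R) (N : nat) : R := (b - a) / INR N.
Definition tstep (T : R) (M : nat) : R := T / INR M.
Definition xg (a b : R) (N i : nat) : R := a + INR i * hstep a b N.
Definition tg (T : R) (M j : nat) : R := INR j * tstep T M.
Definition tgs (alpha T : R) (M j : nat) : R := (INR j + sig alpha) * tstep T M.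

Definition delta_h (alpha beta a b T : R) (gam dp dm : R -> R) (N M j : nat)
    (v : nat -> R) (i : nat) : R :=
  let h := hstep a b N in
  let ts := tgs alpha T M j in
  gam ts * (v (S i) - v (i - 1)%nat) / (2 * h)
  + dp ts / Rpower h beta * sumR (i + 2) (fun k => omega beta k * v (i + 1 - k)%nat)
  + dm ts / Rpower h beta * sumR (N - i + 2) (fun k => omega beta k * v (i + k - 1)%nat).

(* U (indexed U j i = u^j_i) solves the implicit difference scheme *)
Definition scheme_solution (alpha beta a b T : R) (gam dp dm : R -> R)
    (f : R -> R -> R) (phi : R -> R) (G2 : R) (N M : nat)
    (U : nat -> nat -> R) : Prop :=
  (forall i, (1 <= i <= N - 1)%nat -> U 0%nat i = phi (xg a b N i)) /\
  (forall j, (j <= M)%nat -> U j 0%nat = 0 /\ U j N = 0) /\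
  (forall j i, (j < M)%nat -> (1 <= i <= N - 1)%nat ->
     Delta_t alpha (tstep T M) G2 j (fun s => U s i)
     = delta_h alpha beta a b T gam dp dm N M j
         (fun k => sig alpha * U (S j) k + (1 - sig alpha) * U j k) i
       + f (xg a b N i) (tgs alpha T M j)).

Definition trunc_err (alpha beta a b T : R) (gam dp dm : R -> R)
    (f : R -> R -> R) (u : R -> R -> R) (G2 : R) (N M j i : nat) : R :=
  Delta_t alpha (tstep T M) G2 j (fun s => u (xg a b N i) (tg T M s))
  - delta_h alpha beta a b T gam dp dm N M j
      (fun k => sig alpha * u (xg a b N k) (tg T M (S j))
                + (1 - sig alpha) * u (xg a b N k) (tg T M j)) i
  - f (xg a b N i) (tgs alpha T M j).

Definition gnorm (h : R) (N : nat) (v : nat -> R) : R :=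
  sqrt (h * sumR (N - 1) (fun k => v (S k) ^ 2)).

(* Main.v *)
Require Import Defs.
From Stdlib Require Import Reals Lra Lia Psatz Arith Factorial.
From Coquelicot Require Coquelicot.
Open Scope R_scope.

Lemma sumR_ext n f g : (forall k, (k < n)%nat -> f k = g k) -> sumR n f = sumR n g.
Proof. induction n; simpl; intros H; auto. rewrite IHn by (intros; apply H; lia). rewrite H by lia; auto. Qed.

Lemma sumR_plus n f g : sumR n (fun k => f k + g k) = sumR n f + sumR n g.
Proof. induction n; simpl; [lra|rewrite IHn; lra]. Qed.

Lemma sumR_minus n f g : sumR n (fun k => f k - g k) = sumR n f - sumR n g.
Proof. induction n; simpl; [lra|rewrite IHn; lra]. Qed.

Lemma sumR_scal n c f : sumR n (fun k => c * f k) = c * sumR n f.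
Proof. induction n; simpl; [lra|rewrite IHn; lra]. Qed.

Lemma sumR_le n f g : (forall k, (k < n)%nat -> f k <= g k) -> sumR n f <= sumR n g.
Proof. induction n; simpl; intros H; [lra|]. assert (f n <= g n) by (apply H; lia).
  assert (sumR n f <= sumR n g) by (apply IHn; intros; apply H; lia). lra. Qed.

Lemma sumR_nonneg n f : (forall k, (k < n)%nat -> 0 <= f k) -> 0 <= sumR n f.
Proof. intros H. replace 0 with (sumR n (fun _ => 0)). apply sumR_le; auto.
  induction n; simpl; auto. rewrite IHn; [lra|intros; apply H; lia]. Qed.

Lemma sumR_const n c : sumR n (fun _ => c) = INR n * c.
Proof. induction n; simpl sumR; [simpl; lra|rewrite IHn, S_INR; lra]. Qed.

Lemma sumR_shift n f : sumR (S n) f = f 0%nat + sumR n (fun k => f (S k)).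
Proof. induction n; simpl in *; [lra|]. rewrite IHn. lra. Qed.

Lemma sumR_swap n m (F : nat -> nat -> R) :
  sumR n (fun i => sumR m (fun k => F i k)) = sumR m (fun k => sumR n (fun i => F i k)).
Proof. induction n; simpl. { induction m; simpl; auto. rewrite <- IHm; lra. }
  rewrite IHn, <- sumR_plus. auto. Qed.

Lemma sumR_split n m f : sumR (n + m) f = sumR n f + sumR m (fun k => f (n + k)%nat).
Proof. induction m; simpl. rewrite Nat.add_0_r; lra.
  rewrite Nat.add_succ_r; simpl. rewrite IHm. lra. Qed.

Lemma sumR_le_sub n m f : (n <= m)%nat -> (forall k, (k < m)%nat -> 0 <= f k) -> sumR n f <= sumR m f.
Proof. intros Hnm H. replace m with (n + (m - n))%nat by lia. rewrite sumR_split.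
  assert (0 <= sumR (m - n) (fun k => f (n + k)%nat)) by (apply sumR_nonneg; intros; apply H; lia). lra. Qed.

Lemma sumR_abs n f : Rabs (sumR n f) <= sumR n (fun k => Rabs (f k)).
Proof. induction n; simpl. rewrite Rabs_R0; lra.
  eapply Rle_trans. apply Rabs_triang. lra. Qed.

Lemma sumR_CS n f g : sumR n (fun k => f k * g k) ^ 2 <= sumR n (fun k => f k ^ 2) * sumR n (fun k => g k ^ 2).
Proof.
  (* via discriminant: for all t, sum (f + t g)^2 >= 0 *)
  set (A := sumR n (fun k => g k ^ 2)). set (B := sumR n (fun k => f k * g k)). set (C := sumR n (fun k => f k ^ 2)).
  assert (Hq : forall t, 0 <= C + 2 * t * B + t * t * A).
  { intros t. assert (E : C + 2 * t * B + t * t * A = sumR n (fun k => (f k + t * g k) ^ 2)).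
    { unfold A, B, C. rewrite <- !sumR_scal, <- !sumR_plus. apply sumR_ext; intros; ring. }
    rewrite E. apply sumR_nonneg; intros; apply pow2_ge_0. }
  assert (HA : 0 <= A) by (apply sumR_nonneg; intros; apply pow2_ge_0).
  destruct (Req_dec A 0) as [H0|H0].
  - assert (B = 0). { destruct (Req_dec B 0); auto. specialize (Hq (- (C + 1) / (2 * B))).
      rewrite H0 in Hq. replace (C + 2 * (- (C + 1) / (2 * B)) * B + - (C + 1) / (2 * B) * (- (C + 1) / (2 * B)) * 0) with (-1) in Hq by (field; auto). lra. }
    rewrite H, H0. lra.
  - specialize (Hq (- B / A)). assert (0 < A) by lra.
    replace (C + 2 * (- B / A) * B + - B / A * (- B / A) * A) with ((C * A - B * B) / A) in Hq by (field; auto).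
    assert (0 <= C * A - B * B). { apply Rmult_le_reg_r with (/ A). apply Rinv_0_lt_compat; auto. rewrite Rmult_0_l. exact Hq. }
    simpl. lra.
Qed.


Lemma gk_S b k : gk b (S k) = gk b k * (INR k - b) / INR (S k).
Proof. unfold gk, gbinom. simpl prodR. rewrite fact_simpl, mult_INR. simpl pow.
  assert (INR (S k) <> 0) by (apply not_0_INR; lia). assert (INR (fact k) <> 0) by (apply INR_fact_neq_0).
  field. auto. Qed.

Lemma gk_0 b : gk b 0 = 1.
Proof. unfold gk, gbinom; simpl; lra. Qed.

Lemma gk_1 b : gk b 1 = - b.
Proof. rewrite gk_S, gk_0. simpl. lra. Qed.

Lemma gk_2 b : gk b 2 = b * (b - 1) / 2.
Proof. rewrite gk_S, gk_1. simpl. field. Qed.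

Lemma gk_pos b k : 1 < b < 2 -> (2 <= k)%nat -> 0 < gk b k.
Proof. intros Hb Hk. induction k as [|k IH]; [lia|].
  destruct (Nat.eq_dec k 1) as [->|Hk1]. rewrite gk_2. nra.
  rewrite gk_S. assert (2 <= INR k) by (replace 2 with (INR 2) by (simpl; lra); apply le_INR; lia).
  assert (0 < gk b k) by (apply IH; lia). rewrite S_INR. apply Rmult_lt_0_compat. apply Rmult_lt_0_compat; lra.
  apply Rinv_0_lt_compat; lra. Qed.

Lemma sum_gk b n : 1 < b -> sumR (S n) (gk b) = gk b n * (b - INR n) / b.
Proof. intros Hb. induction n. simpl. rewrite gk_0. field. lra.
  replace (sumR (S (S n)) (gk b)) with (sumR (S n) (gk b) + gk b (S n)) by (simpl; lra).
  rewrite IHn, gk_S. rewrite S_INR. pose proof (pos_INR n). field; repeat split; lra. Qed.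

Definition l1 := lam1. Definition l0 := lam0. Definition lm := lamm1.

Lemma omega_SS0 b n : omega b (S (S n)) = lam1 b * gk b (S (S n)) + lam0 b * gk b (S n) + lamm1 b * gk b n.
Proof. reflexivity. Qed.

Lemma sum_omega b n : sumR (S (S (S n))) (omega b) =
  lam1 b * sumR (S (S (S n))) (gk b) + lam0 b * sumR (S (S n)) (gk b) + lamm1 b * sumR (S n) (gk b).
Proof. induction n.
  - simpl. rewrite !gk_0. lra.
  - replace (sumR (S (S (S (S n)))) (omega b)) with (sumR (S (S (S n))) (omega b) + omega b (S (S (S n)))) by (simpl; lra).
    rewrite IHn. rewrite omega_SS0.
    replace (sumR (S (S (S (S n)))) (gk b)) with (sumR (S (S (S n))) (gk b) + gk b (S (S (S n)))) by (simpl; lra).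
    replace (sumR (S (S (S n))) (gk b)) with (sumR (S (S n)) (gk b) + gk b (S (S n))) by (simpl; lra).
    replace (sumR (S (S n)) (gk b)) with (sumR (S n) (gk b) + gk b (S n)) by (simpl; lra). lra. Qed.

Lemma omega_SS b n : omega b (S (S n)) = lam1 b * gk b (S (S n)) + lam0 b * gk b (S n) + lamm1 b * gk b n.
Proof. reflexivity. Qed.

Lemma omega_ge0 b k : 1 < b < 2 -> (3 <= k)%nat -> 0 <= omega b k.
Proof. intros Hb Hk. destruct k as [|[|[|n]]]; try lia. rewrite omega_SS.
  rewrite (gk_S b (S (S n))), (gk_S b (S n)). rewrite !S_INR.
  set (x := INR n + 1). assert (1 <= x) by (unfold x; pose proof (pos_INR n); lra).
  set (G := gk b (S n)).
  unfold lam1, lam0, lamm1.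
  assert (E : (b ^ 2 + 3 * b + 2) / 12 * (G * (x - b) / (x + 1) * (x + 1 - b) / (x + 1 + 1)) +
    (4 - b ^ 2) / 6 * (G * (x - b) / (x + 1)) + (b ^ 2 - 3 * b + 2) / 12 * G =
    G * ((b ^ 2 + 3 * b + 2) * (x - b) * (x + 1 - b) + 2 * (4 - b ^ 2) * (x - b) * (x + 2)
         + (b ^ 2 - 3 * b + 2) * (x + 1) * (x + 2)) / (12 * (x + 1) * (x + 1 + 1))).
  { field. lra. }
  rewrite E. clear E.
  apply Rmult_le_pos; [|left; apply Rinv_0_lt_compat; nra].
  destruct n as [|n].
  - unfold G. rewrite gk_1. assert (Hx : x = 1) by (unfold x; simpl; lra). rewrite Hx.
    assert ((b ^ 2 + 3 * b + 2) * (1 - b) * (1 + 1 - b) + 2 * (4 - b ^ 2) * (1 - b) * (1 + 2) +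
      (b ^ 2 - 3 * b + 2) * (1 + 1) * (1 + 2) <= 0).
    { replace ((b ^ 2 + 3 * b + 2) * (1 - b) * (1 + 1 - b) + 2 * (4 - b ^ 2) * (1 - b) * (1 + 2) +
      (b ^ 2 - 3 * b + 2) * (1 + 1) * (1 + 2)) with (- ((b - 1) * (2 - b)) * (b * b + 9 * b + 20)) by ring.
      assert (0 < (b - 1) * (2 - b)) by nra. nra. }
    nra.
  - assert (0 < G) by (apply gk_pos; auto; lia).
    assert (2 <= x) by (unfold x; rewrite S_INR; pose proof (pos_INR n); lra).
    apply Rmult_le_pos; [lra|].
    replace ((b ^ 2 + 3 * b + 2) * (x - b) * (x + 1 - b) + 2 * (4 - b ^ 2) * (x - b) * (x + 2) +
      (b ^ 2 - 3 * b + 2) * (x + 1) * (x + 2)) with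
      (12 * (x - 2) ^ 2 + (12 + 42 * (2 - b) - 6 * (2 - b) ^ 2) * (x - 2) + (2 - b) ^ 2 * (49 - 14 * (2 - b) + (2 - b) ^ 2)) by ring.
    assert (0 <= (12 + 42 * (2 - b) - 6 * (2 - b) ^ 2) * (x - 2)) by (apply Rmult_le_pos; nra).
    assert (0 <= (2 - b) ^ 2 * (49 - 14 * (2 - b) + (2 - b) ^ 2)) by (apply Rmult_le_pos; nra).
    nra.
Qed.

Lemma omega02 b : 1 < b < 2 -> 0 <= omega b 0 + omega b 2.
Proof. intros Hb. rewrite omega_SS. simpl omega. rewrite gk_2, gk_1, gk_0. unfold lam1, lam0, lamm1.
  replace ((b ^ 2 + 3 * b + 2) / 12 * 1 + ((b ^ 2 + 3 * b + 2) / 12 * (b * (b - 1) / 2) + (4 - b ^ 2) / 6 * - b + (b ^ 2 - 3 * b + 2) / 12 * 1))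
   with ((b - 1) * (b ^ 3 / 2 + 7 / 2 * b ^ 2 + 5 * b - 4) / 12) by field.
  apply Rmult_le_pos; [|lra]. apply Rmult_le_pos; nra. Qed.

Lemma omega_partial b N : 1 < b < 2 -> (5 <= N)%nat -> sumR (S N) (omega b) <= 0.
Proof. intros Hb HN. destruct N as [|[|[|n]]]; try lia.
  rewrite sum_omega, !sum_gk by lra.
  rewrite (gk_S b (S (S n))), (gk_S b (S n)). rewrite !S_INR.
  set (x := INR n). assert (2 <= x) by (unfold x; replace 2 with (INR 2) by (simpl;lra); apply le_INR; lia).
  assert (0 < gk b (S n)) by (apply gk_pos; auto; lia). set (G := gk b (S n)) in *.
  unfold lam1, lam0, lamm1.
  assert (E : (b ^ 2 + 3 * b + 2) / 12 *
  (G * (x + 1 - b) / (x + 1 + 1) * (x + 1 + 1 - b) / (x + 1 + 1 + 1) *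
   (b - (x + 1 + 1 + 1)) / b) +
  (4 - b ^ 2) / 6 *
  (G * (x + 1 - b) / (x + 1 + 1) * (b - (x + 1 + 1)) / b) +
  (b ^ 2 - 3 * b + 2) / 12 * (G * (b - (x + 1)) / b)
   = - (G * (x + 1 - b) / b) * ((b ^ 2 + 3 * b + 2) * (x + 2 - b) * (x + 3 - b) + 2 * (4 - b ^ 2) * (x + 2 - b) * (x + 3)
         + (b ^ 2 - 3 * b + 2) * (x + 2) * (x + 3)) / (12 * (x + 2) * (x + 3))).
  { field. lra. }
  rewrite E. clear E.
  assert (0 <= G * (x + 1 - b) / b) by (apply Rmult_le_pos; [nra| left; apply Rinv_0_lt_compat; lra]).
  assert (0 <= ((b ^ 2 + 3 * b + 2) * (x + 2 - b) * (x + 3 - b) + 2 * (4 - b ^ 2) * (x + 2 - b) * (x + 3)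
         + (b ^ 2 - 3 * b + 2) * (x + 2) * (x + 3)) / (12 * (x + 2) * (x + 3))).
  { apply Rmult_le_pos; [|left; apply Rinv_0_lt_compat; nra].
    replace ((b ^ 2 + 3 * b + 2) * (x + 2 - b) * (x + 3 - b) + 2 * (4 - b ^ 2) * (x + 2 - b) * (x + 3)
         + (b ^ 2 - 3 * b + 2) * (x + 2) * (x + 3)) with
      ((b ^ 2 + 3 * b + 2) * ((x + 2 - b) * (x + 3 - b)) + ((2 - b) * (x + 3)) * (2 * (2 + b) * (x + 2 - b) - (b - 1) * (x + 2))) by ring.
    assert (0 <= (x + 2 - b) * (x + 3 - b)) by nra.
    assert (0 <= 2 * (2 + b) * (x + 2 - b) - (b - 1) * (x + 2)) by nra.
    assert (0 <= (2 - b) * (x + 3)) by nra.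
    assert (0 <= (b ^ 2 + 3 * b + 2) * ((x + 2 - b) * (x + 3 - b))) by (apply Rmult_le_pos; nra).
    assert (0 <= (2 - b) * (x + 3) * (2 * (2 + b) * (x + 2 - b) - (b - 1) * (x + 2))) by (apply Rmult_le_pos; nra).
    lra. }
  nra.
Qed.


Lemma omega_form b N (D : nat -> R) Sv : 1 < b < 2 -> (5 <= N)%nat -> 0 <= Sv ->
  D 0%nat = D 2%nat -> D 1%nat = Sv -> (forall q, (q < S N)%nat -> D q <= Sv) ->
  sumR (S N) (fun q => omega b q * D q) <= 0.
Proof.
  intros Hb HN HS H02 H1 HD.
  assert (Hp := omega_partial b N Hb HN).
  assert (sumR (S N) (fun q => omega b q * D q) <= sumR (S N) (fun q => omega b q * Sv)).
  { destruct N as [|[|[|n]]]; try lia.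
    rewrite !(sumR_shift (S (S (S n)))), !(sumR_shift (S (S n))), !(sumR_shift (S n)).
    assert (sumR (S n) (fun k => omega b (S (S (S k))) * D (S (S (S k)))) <= sumR (S n) (fun k => omega b (S (S (S k))) * Sv)).
    { apply sumR_le; intros k Hk. apply Rmult_le_compat_l. apply omega_ge0; auto; lia. apply HD; lia. }
    assert (H0 : D 0%nat <= Sv) by (apply HD; lia).
    pose proof (omega02 b Hb).
    assert (Hx : (omega b 0 + omega b 2) * (D 0%nat - Sv) <= 0) by nra.
    rewrite H1, <- H02. nra. }
  assert (sumR (S N) (fun q => omega b q * Sv) <= 0).
  { rewrite (sumR_ext _ _ (fun q => Sv * omega b q)) by (intros; ring). rewrite sumR_scal. nra. }
  lra.
Qed.

Lemma sum_shift_down (f : nat -> R) n d : f 0%nat = 0 ->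
  sumR n (fun k => f (S k - d)%nat) = sumR (n - d) (fun k => f (S k)).
Proof. intros H0. induction n. simpl; auto.
  cbn [sumR]. rewrite IHn. destruct (le_lt_dec d n).
  - replace (S n - d)%nat with (S (n - d)) by lia. simpl. auto.
  - assert (E1 : (S n - d = 0)%nat) by lia. assert (E2 : (n - d = 0)%nat) by lia. rewrite E1, E2. simpl. rewrite H0; lra.
Qed.

Lemma sum_shift_up (g : nat -> R) n d : (forall k, 0 <= g k) -> (forall m, (n < m)%nat -> g m = 0) ->
  sumR n (fun k => g (S k + d)%nat) <= sumR n (fun k => g (S k)).
Proof. intros Hg Hz.
  assert (E1 : sumR (d + n) (fun k => g (S k)) = sumR d (fun k => g (S k)) + sumR n (fun k => g (S (d + k)))) by apply sumR_split.
  assert (E2 : sumR (n + d) (fun k => g (S k)) = sumR n (fun k => g (S k)) + sumR d (fun k => g (S (n + k)))) by apply sumR_split.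
  rewrite (sumR_ext _ (fun k => g (S k + d)%nat) (fun k => g (S (d + k)))) by (intros; f_equal; lia).
  rewrite (sumR_ext d (fun k => g (S (n + k))) (fun _ => 0)) in E2 by (intros; apply Hz; lia).
  replace (sumR d (fun _ => 0)) with 0 in E2 by (rewrite sumR_const; ring).
  replace (d + n)%nat with (n + d)%nat in E1 by lia.
  assert (0 <= sumR d (fun k => g (S k))) by (apply sumR_nonneg; auto). lra.
Qed.

Lemma prod_le_half x y : x * y <= (x ^ 2 + y ^ 2) / 2.
Proof. assert (0 <= (x - y) ^ 2) by apply pow2_ge_0. nra. Qed.

Lemma cross_le n (v w : nat -> R) :
  sumR n (fun k => w k ^ 2) <= sumR n (fun k => v k ^ 2) ->
  sumR n (fun k => v k * w k) <= sumR n (fun k => v k ^ 2).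
Proof. intros H.
  assert (sumR n (fun k => v k * w k) <= sumR n (fun k => (v k ^ 2 + w k ^ 2) / 2)) by (apply sumR_le; intros; apply prod_le_half).
  rewrite (sumR_ext _ (fun k => (v k ^ 2 + w k ^ 2) / 2) (fun k => / 2 * (v k ^ 2 + w k ^ 2))) in H0 by (intros; field).
  rewrite sumR_scal, sumR_plus in H0. lra. Qed.

Section Space.
Variable b : R.
Variable N : nat.
Variable v : nat -> R.
Hypothesis Hb : 1 < b < 2.
Hypothesis HN : (5 <= N)%nat.
Hypothesis Hv0 : v 0%nat = 0.
Hypothesis HvN : v N = 0.

Let n := (N - 1)%nat.
Let Sv := sumR n (fun k => v (S k) ^ 2).

Lemma Sv_ge0 : 0 <= Sv.
Proof. apply sumR_nonneg; intros; apply pow2_ge_0. Qed.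

Lemma C02 : sumR n (fun k => v (S k) * v k) = sumR n (fun k => v (S k) * v (S (S k))).
Proof. unfold n. destruct N as [|m]; [lia|]. replace (S m - 1)%nat with (S (m - 1)) by lia.
  rewrite sumR_shift. rewrite Hv0. replace (sumR (S (m-1)) (fun k => v (S k) * v (S (S k))))
   with (sumR (m-1) (fun k => v (S k) * v (S (S k))) + v (S (m - 1)) * v (S (S (m-1)))) by (simpl; lra).
  replace (S (S (m - 1))) with (S m) by lia. rewrite HvN.
  assert (sumR (m - 1) (fun k => v (S (S k)) * v (S k)) = sumR (m - 1) (fun k => v (S k) * v (S (S k)))) by (apply sumR_ext; intros; ring).
  lra. Qed.

Lemma gamma_term : sumR n (fun k => v (S k) * (v (S (S k)) - v (S k - 1)%nat)) = 0.
Proof. rewrite (sumR_ext _ _ (fun k => v (S k) * v (S (S k)) - v (S k) * v k)).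
  rewrite sumR_minus, C02. ring. intros k _. replace (S k - 1)%nat with k by lia. ring. Qed.

Lemma left_term : sumR n (fun k => v (S k) * sumR (S k + 2) (fun q => omega b q * v (S k + 1 - q)%nat)) <= 0.
Proof.
  rewrite (sumR_ext _ _ (fun k => sumR (S N) (fun q => v (S k) * (omega b q * v (S k + 1 - q)%nat)))).
  2:{ intros k Hk. rewrite <- sumR_scal. replace (S N) with (S k + 2 + (N - S k - 1))%nat by (unfold n in Hk; lia).
      rewrite (sumR_split (S k + 2) (N - S k - 1)). rewrite (sumR_ext (N - S k - 1) _ (fun _ => 0)). rewrite sumR_const; ring.
      intros q Hq. replace (S k + 1 - (S k + 2 + q))%nat with 0%nat by lia. rewrite Hv0; ring. }
  rewrite sumR_swap.
  rewrite (sumR_ext _ _ (fun q => omega b q * sumR n (fun k => v (S k) * v (S k + 1 - q)%nat))).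
  2:{ intros q _. rewrite <- sumR_scal. apply sumR_ext; intros; ring. }
  apply omega_form with (Sv := Sv); auto. apply Sv_ge0.
  - simpl. rewrite (sumR_ext _ _ (fun k => v (S k) * v (S (S k)))) by (intros; f_equal; f_equal; lia).
    rewrite <- C02. apply sumR_ext; intros; f_equal; f_equal; lia.
  - unfold Sv. apply sumR_ext; intros; simpl. replace (k + 1 - 0)%nat with (S k) by lia. ring.
  - intros q Hq. destruct q as [|q].
    + rewrite (sumR_ext _ _ (fun k => v (S k) * v (S (S k)))) by (intros; f_equal; f_equal; lia).
      apply cross_le. unfold n. destruct N as [|m]; [lia|]. replace (S m - 1)%nat with (S (m - 1)) by lia.
      rewrite (sumR_shift (m - 1) (fun k => v (S k) ^ 2)).
      replace (sumR (S (m - 1)) (fun k => v (S (S k)) ^ 2)) with (sumR (m - 1) (fun k => v (S (S k)) ^ 2) + v (S (S (m-1))) ^ 2) by (simpl; lra).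
      replace (S (S (m - 1))) with (S m) by lia. rewrite HvN. pose proof (pow2_ge_0 (v 1%nat)). lra.
    + apply cross_le.
      rewrite (sumR_ext _ _ (fun k => (fun j => v j ^ 2) (S k - q)%nat)) by (intros; f_equal; f_equal; lia).
      assert (E := sum_shift_down (fun j => v j ^ 2) n q). cbv beta in E. rewrite E by (simpl; rewrite Hv0; ring).
      apply sumR_le_sub. lia. intros; apply pow2_ge_0.
Qed.

Let w := fun m => if (m <=? N)%nat then v m else 0.

Lemma right_term : sumR n (fun k => v (S k) * sumR (N - S k + 2) (fun q => omega b q * v (S k + q - 1)%nat)) <= 0.
Proof.
  rewrite (sumR_ext _ _ (fun k => sumR (S N) (fun q => v (S k) * (omega b q * w (S k + q - 1)%nat)))).
  2:{ intros k Hk. rewrite <- sumR_scal. replace (S N) with (N - S k + 2 + (k))%nat by (unfold n in Hk; lia).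
      rewrite (sumR_split (N - S k + 2) k). rewrite (sumR_ext k _ (fun _ => 0)). rewrite sumR_const, Rmult_0_r, Rplus_0_r.
      apply sumR_ext. intros q Hq. unfold w. replace (S k + q - 1 <=? N)%nat with true. auto.
      symmetry; apply Nat.leb_le; lia.
      intros q Hq. unfold w. replace (S k + (N - S k + 2 + q) - 1 <=? N)%nat with false. ring.
      symmetry; apply Nat.leb_gt; lia. }
  rewrite sumR_swap.
  rewrite (sumR_ext _ _ (fun q => omega b q * sumR n (fun k => v (S k) * w (S k + q - 1)%nat))).
  2:{ intros q _. rewrite <- sumR_scal. apply sumR_ext; intros; ring. }
  assert (Hw : forall m, (m <= N)%nat -> w m = v m).
  { intros m Hm. unfold w. replace (m <=? N)%nat with true; auto. symmetry; apply Nat.leb_le; auto. }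
  assert (E0 : sumR n (fun k => v (S k) * w (S k + 0 - 1)%nat) = sumR n (fun k => v (S k) * v (S (S k)))).
  { rewrite <- C02. apply sumR_ext; intros k Hk. rewrite Hw by (unfold n in Hk; lia). f_equal; f_equal; lia. }
  apply omega_form with (Sv := Sv); auto. apply Sv_ge0.
  - rewrite E0. apply sumR_ext; intros k Hk. rewrite Hw by (unfold n in Hk; lia). f_equal; f_equal; lia.
  - unfold Sv. apply sumR_ext; intros k Hk. rewrite Hw by (unfold n in Hk; lia). replace (S k + 1 - 1)%nat with (S k) by lia. ring.
  - intros q Hq. destruct q as [|q].
    + rewrite E0. apply cross_le. unfold n. destruct N as [|m]; [lia|]. replace (S m - 1)%nat with (S (m - 1)) by lia.
      rewrite (sumR_shift (m - 1) (fun k => v (S k) ^ 2)).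
      replace (sumR (S (m - 1)) (fun k => v (S (S k)) ^ 2)) with (sumR (m - 1) (fun k => v (S (S k)) ^ 2) + v (S (S (m-1))) ^ 2) by (simpl; lra).
      replace (S (S (m - 1))) with (S m) by lia. rewrite HvN. pose proof (pow2_ge_0 (v 1%nat)). lra.
    + apply cross_le.
      rewrite (sumR_ext _ _ (fun k => (fun j => w j ^ 2) (S k + q)%nat)) by (intros; f_equal; f_equal; lia).
      assert (E := sum_shift_up (fun j => w j ^ 2) n q). cbv beta in E.
      eapply Rle_trans. apply E. intros; apply pow2_ge_0.
      intros m Hm. unfold w. destruct (m <=? N)%nat eqn:Em. apply Nat.leb_le in Em. replace m with N by (unfold n in Hm; lia). rewrite HvN; ring. ring.
      right. apply sumR_ext; intros k Hk. rewrite Hw by (unfold n in Hk; lia). auto.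
Qed.

End Space.

Module CoqP.
Import Coquelicot.Coquelicot.

Lemma is_derive_Rpower x e : 0 < x -> is_derive (fun y => Rpower y e) x (e * Rpower x (e - 1)).
Proof. intros Hx. apply is_derive_Reals. apply derivable_pt_lim_power; auto. Qed.

Lemma ex_derive_Rpower x e : 0 < x -> ex_derive (fun y => Rpower y e) x.
Proof. intros Hx. eexists. apply is_derive_Rpower; auto. Qed.

Lemma Derive_Rpower x e : 0 < x -> Derive (fun y => Rpower y e) x = e * Rpower x (e - 1).
Proof. intros Hx. apply is_derive_unique. apply is_derive_Rpower; auto. Qed.

Lemma mvt (f f' : R -> R) a b : a < b -> (forall c, a <= c <= b -> is_derive f c (f' c)) ->
  exists c, a < c < b /\ f b - f a = f' c * (b - a).
Proof. intros Hab H. destruct (MVT_cor2 f f' a b Hab) as [c [Hc1 Hc2]].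
  intros c Hc. apply is_derive_Reals. auto. exists c; split; auto. Qed.

Lemma incr_deriv (f f' : R -> R) a b : a <= b -> (forall c, a <= c <= b -> is_derive f c (f' c)) ->
  (forall c, a < c < b -> 0 <= f' c) -> f a <= f b.
Proof. intros Hab H Hp. destruct (Req_dec a b) as [->|Hne]. lra.
  destruct (mvt f f' a b) as [c [Hc E]]; auto. lra. specialize (Hp c Hc). nra. Qed.

Lemma Rpower_pos x e : 0 < Rpower x e.
Proof. unfold Rpower. apply exp_pos. Qed.

Lemma Rpower_decr x y e : 0 < x <= y -> e <= 0 -> Rpower y e <= Rpower x e.
Proof. intros Hxy He. replace e with (- (- e)) by ring. rewrite (Rpower_Ropp y (-e)), (Rpower_Ropp x (-e)).
  apply Rinv_le_contravar. apply Rpower_pos. apply Rle_Rpower_l; lra. Qed.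

Lemma Rpower_incr x y e : 0 < x <= y -> 0 <= e -> Rpower x e <= Rpower y e.
Proof. intros. apply Rle_Rpower_l; lra. Qed.

Lemma Rpower_1_l e : Rpower 1 e = 1.
Proof. unfold Rpower. rewrite ln_1, Rmult_0_r, exp_0. auto. Qed.

Lemma decr_deriv (f f' : R -> R) a b : a <= b -> (forall c, a <= c <= b -> is_derive f c (f' c)) ->
  (forall c, a < c < b -> f' c <= 0) -> f b <= f a.
Proof. intros Hab H Hp. destruct (Req_dec a b) as [->|Hne]. lra.
  destruct (mvt f f' a b) as [c [Hc E]]; auto. lra. specialize (Hp c Hc). nra. Qed.


Section Coef.
Variable al : R.
Hypothesis Hal : 0 < al < 1.

Definition Fp x := Rpower x (1 - al).
Definition kp x := (1 - al) * Rpower x (- al).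
Definition kdp x := (1 - al) * (- al) * Rpower x (- al - 1).
Definition Gp x := / (2 - al) * Rpower x (2 - al).

Ltac dsolve := auto_derive; [repeat split; apply ex_derive_Rpower; lra|];
  rewrite ?Derive_Rpower by lra;
  try replace (1 - al - 1) with (- al) by ring;
  try replace (2 - al - 1) with (1 - al) by ring;
  try replace (- al - 1) with (- al - 1) by ring.

Lemma dF x : 0 < x -> is_derive Fp x (kp x).
Proof. intros. unfold Fp, kp. dsolve. ring. Qed.
Lemma dk x : 0 < x -> is_derive kp x (kdp x).
Proof. intros. unfold kp, kdp. dsolve. ring. Qed.
Lemma dG x : 0 < x -> is_derive Gp x (Fp x).
Proof. intros. unfold Gp, Fp. dsolve. field. lra. Qed.

Lemma k_decr x y : 0 < x <= y -> kp y <= kp x.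
Proof. intros. unfold kp. apply Rmult_le_compat_l. lra. apply Rpower_decr; lra. Qed.
Lemma kd_incr x y : 0 < x <= y -> kdp x <= kdp y.
Proof. intros. unfold kdp. assert (Rpower y (-al-1) <= Rpower x (-al-1)) by (apply Rpower_decr; lra).
  assert (0 < (1 - al) * al) by nra. nra. Qed.

Lemma mF p q : 0 < p < q -> kp q * (q - p) <= Fp q - Fp p <= kp p * (q - p).
Proof. intros Hpq. destruct (mvt Fp kp p q) as [c [Hc E]]. lra. intros; apply dF; lra.
  rewrite E. assert (kp q <= kp c) by (apply k_decr; lra). assert (kp c <= kp p) by (apply k_decr; lra). split; nra. Qed.

Lemma mk p q : 0 < p < q -> kdp p * (q - p) <= kp q - kp p <= kdp q * (q - p).
Proof. intros Hpq. destruct (mvt kp kdp p q) as [c [Hc E]]. lra. intros; apply dk; lra.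
  rewrite E. assert (kdp c <= kdp q) by (apply kd_incr; lra). assert (kdp p <= kdp c) by (apply kd_incr; lra). split; nra. Qed.

Definition Af p := Fp (p + 1) - Fp p.
Definition Bf p := Gp (p + 1) - Gp p - / 2 * (Fp (p + 1) + Fp p).
Definition Bd p := Fp (p + 1) - Fp p - / 2 * (kp (p + 1) + kp p).
Definition Cf p := Af p + Bf (p + 1) - Bf p.

Lemma f1 p : 0 < p -> kp (p + 1) <= Af p <= kp p.
Proof. intros. unfold Af. pose proof (mF p (p + 1)). replace (p + 1 - p) with 1 in H0 by ring. lra. Qed.

Lemma f2 p : 0 < p -> 0 <= Bf p.
Proof. intros Hp.
  set (phi := fun x => / (2 - al) * Rpower x (2 - al) - / (2 - al) * Rpower p (2 - al) - (x - p) / 2 * (Rpower p (1 - al) + Rpower x (1 - al))).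
  set (phi' := fun x => Rpower x (1 - al) - / 2 * (Rpower p (1 - al) + Rpower x (1 - al)) - (x - p) / 2 * ((1 - al) * Rpower x (- al))).
  assert (phi p <= phi (p + 1)).
  { apply (incr_deriv phi phi'). lra.
    - intros c Hc. unfold phi, phi'. dsolve. field. lra.
    - intros c Hc. unfold phi'. pose proof (mF p c ltac:(lra)). unfold Fp, kp in H. nra. }
  unfold phi, Bf, Gp, Fp in *. replace (p - p) with 0 in H by ring. replace (p + 1 - p) with 1 in H by ring. lra.
Qed.

Lemma dB p : 0 < p -> is_derive Bf p (Bd p).
Proof. intros. unfold Bf, Bd, Gp, Fp, kp. dsolve. field. lra. Qed.

Lemma Bd_neg p : 0 < p -> Bd p <= 0.
Proof. intros Hp.
  set (psi := fun x => - (Rpower x (1 - al) - Rpower p (1 - al) - (x - p) / 2 * ((1 - al) * Rpower p (- al) + (1 - al) * Rpower x (- al)))).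
  set (psi' := fun x => - ((1 - al) * Rpower x (- al) - / 2 * ((1 - al) * Rpower p (- al) + (1 - al) * Rpower x (- al)) - (x - p) / 2 * ((1 - al) * (- al) * Rpower x (- al - 1)))).
  assert (psi p <= psi (p + 1)).
  { apply (incr_deriv psi psi'). lra.
    - intros c Hc. unfold psi, psi'. dsolve. field.
    - intros c Hc. unfold psi'. pose proof (mk p c ltac:(lra)). unfold kp, kdp in H. nra. }
  unfold psi, Bd, Fp, kp in *. replace (p - p) with 0 in H by ring. replace (p + 1 - p) with 1 in H by ring. lra.
Qed.

Lemma f3 p : 0 < p -> Bf (p + 1) <= Bf p.
Proof. intros Hp. apply (decr_deriv Bf Bd). lra.
    - intros c Hc. apply dB. lra.
    - intros c Hc. apply Bd_neg. lra. Qed.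

Lemma Cd_neg p : 0 < p -> kp (p + 1) - kp p + Bd (p + 1 + 1) * 0 + (Bd (p + 1) - Bd p) <= 0.
Proof. intros Hp. unfold Bd. rewrite Rmult_0_r.
  pose proof (mk p (p + 1) ltac:(lra)). pose proof (mk (p + 1) (p + 1 + 1) ltac:(lra)).
  pose proof (mF p (p + 1) ltac:(lra)). pose proof (mF (p + 1) (p + 1 + 1) ltac:(lra)).
  replace (p + 1 - p) with 1 in * by ring. replace (p + 1 + 1 - (p + 1)) with 1 in * by ring.
  lra. Qed.

Lemma f4 p : 0 < p -> Cf (p + 1) <= Cf p.
Proof. intros Hp. apply (decr_deriv Cf (fun x => kp (x + 1) - kp x + (Bd (x + 1) - Bd x))). lra.
    - intros c Hc. unfold Cf, Af, Bf, Bd, Gp, Fp, kp. dsolve. field. lra.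
    - intros c Hc. pose proof (Cd_neg c ltac:(lra)). lra. Qed.

Lemma f5 p : 0 < p -> kp (p + 1) <= Af p - Bf p.
Proof. intros Hp.
  set (H := fun x => (x - p + / 2) * Rpower x (1 - al) - / 2 * Rpower p (1 - al) - / (2 - al) * Rpower x (2 - al) + / (2 - al) * Rpower p (2 - al)
     - (1 - al) * Rpower (p + 1) (- al) * ((x - p) / 2 + (x - p) ^ 2 / 2)).
  set (H' := fun x => (x - p + / 2) * ((1 - al) * Rpower x (- al) - (1 - al) * Rpower (p + 1) (- al))).
  assert (H p <= H (p + 1)).
  { apply (incr_deriv H H'). lra.
    - intros c Hc. unfold H, H'. dsolve. field. lra.
    - intros c Hc. unfold H'. pose proof (k_decr c (p + 1) ltac:(lra)). unfold kp in H0. apply Rmult_le_pos; lra. }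
  unfold H, Af, Bf, Gp, Fp, kp in *. replace (p - p) with 0 in H0 by ring. replace (p + 1 - p) with 1 in H0 by ring. lra.
Qed.

End Coef.

End CoqP.
Import CoqP.

Section CC.
Variable al : R.
Hypothesis Hal : 0 < al < 1.
Let s := sig al.
Lemma s_range : 1 / 2 < s < 1.
Proof. unfold s, sig. lra. Qed.

Lemma a0_eq : acoef al 0 = Fp al s.
Proof. reflexivity. Qed.
Lemma aS_eq l : acoef al (S l) = Af al (INR l + s).
Proof. unfold acoef, Af, Fp. rewrite S_INR. fold s. f_equal; f_equal; ring. Qed.
Lemma bS_eq l : bcoef al (S l) = Bf al (INR l + s).
Proof. unfold bcoef, Bf, Gp, Fp. rewrite S_INR. fold s.
  replace (INR l + 1 + s) with (INR l + s + 1) by ring. replace (INR l + 1 - 1 + s) with (INR l + s) by ring. ring. Qed.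

Lemma Fs_eq : Fp al s = s * Rpower s (- al).
Proof. unfold Fp. replace (1 - al) with (1 + - al) by ring. rewrite Rpower_plus, Rpower_1. auto. pose proof s_range; lra. Qed.

Lemma ks_le_Fs : kp al s <= Fp al s.
Proof. rewrite Fs_eq. unfold kp. pose proof (Rpower_pos s (-al)). unfold s, sig in *. nra. Qed.

Lemma s2ks : s ^ 2 * kp al s <= (1 - al) * Fp al s.
Proof. rewrite Fs_eq. unfold kp. pose proof (Rpower_pos s (-al)). pose proof s_range.
  assert (0 <= (s - s ^ 2) * ((1 - al) * Rpower s (- al))).
  { apply Rmult_le_pos. nra. apply Rmult_le_pos; lra. } nra. Qed.

Lemma INR_s_pos m : 0 < INR m + s.
Proof. pose proof (pos_INR m); pose proof s_range; lra. Qed.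

Lemma c_S0 j : ccoef al (S j) 0 = Fp al s + Bf al s.
Proof. unfold ccoef. replace (Nat.eqb 0 0) with true by reflexivity.
  rewrite a0_eq. change 1%nat with (S 0). rewrite bS_eq. simpl INR. rewrite Rplus_0_l. auto. Qed.

Lemma c_Smid j m : (S m < S j)%nat -> ccoef al (S j) (S m) = Cf al (INR m + s).
Proof. intros H. unfold ccoef. replace (Nat.eqb (S m) 0) with false by reflexivity.
  replace (Nat.ltb (S m) (S j)) with true by (symmetry; apply Nat.ltb_lt; auto).
  rewrite aS_eq, !bS_eq. unfold Cf. rewrite S_INR. f_equal. f_equal. f_equal. ring. Qed.

Lemma c_Slast j : ccoef al (S j) (S j) = Af al (INR j + s) - Bf al (INR j + s).
Proof. unfold ccoef. replace (Nat.eqb (S j) 0) with false by reflexivity.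
  replace (Nat.ltb (S j) (S j)) with false by (symmetry; apply Nat.ltb_ge; auto).
  rewrite aS_eq, bS_eq. auto. Qed.

Lemma c_mono j m : (m < j)%nat -> ccoef al j (S m) <= ccoef al j m.
Proof. intros Hm. destruct j as [|j']; [lia|].
  destruct m as [|m'].
  - rewrite c_S0. pose proof (f2 al Hal s ltac:(pose proof s_range; lra)).
    pose proof (f1 al Hal s ltac:(pose proof s_range; lra)). pose proof ks_le_Fs.
    destruct j' as [|j''].
    + rewrite c_Slast. simpl. rewrite Rplus_0_l. lra.
    + rewrite c_Smid by lia. simpl. rewrite Rplus_0_l. unfold Cf.
      pose proof (f3 al Hal s ltac:(pose proof s_range; lra)). lra.
  - rewrite (c_Smid j' m') by lia. pose proof (INR_s_pos m').
    assert (Hc := f4 al Hal (INR m' + s) H).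
    destruct (Nat.eq_dec (S (S m')) (S j')) as [E|E].
    + rewrite E. rewrite c_Slast. injection E as E. subst j'. replace (INR (S m') + s) with (INR m' + s + 1) by (rewrite S_INR; ring).
      unfold Cf in Hc |- *. assert (Hq : 0 < INR m' + s + 1 + 1) by (pose proof (INR_s_pos m'); lra). pose proof (f2 al Hal (INR m' + s + 1 + 1) Hq). lra.
    + rewrite c_Smid by lia. replace (INR (S m') + s) with (INR m' + s + 1) by (rewrite S_INR; ring). lra.
Qed.

Lemma c_last_lb j : (1 - al) * Rpower (INR j + 1) (- al) <= ccoef al j j.
Proof. destruct j as [|j'].
  - unfold ccoef. rewrite a0_eq, Fs_eq. simpl INR. rewrite Rplus_0_l, Rpower_1_l.
    assert (Rpower 1 (-al) <= Rpower s (-al)) by (apply Rpower_decr; pose proof s_range; lra).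
    rewrite Rpower_1_l in H. pose proof s_range. unfold s, sig in *. nra.
  - rewrite c_Slast. pose proof (f5 al Hal (INR j' + s) (INR_s_pos j')). unfold kp in H.
    assert (Rpower (INR (S j') + 1) (- al) <= Rpower (INR j' + s + 1) (- al)).
    { apply Rpower_decr; [|lra]. rewrite S_INR. pose proof (INR_s_pos j'). pose proof s_range. lra. }
    nra.
Qed.

Lemma c_alik j : (1 <= j)%nat -> s ^ 2 * ccoef al j 1 <= (1 - al) * ccoef al j 0.
Proof. intros Hj. destruct j as [|j']; [lia|]. rewrite c_S0.
  pose proof (f2 al Hal s ltac:(pose proof s_range; lra)).
  pose proof (f1 al Hal s ltac:(pose proof s_range; lra)). pose proof s2ks.
  assert (ccoef al (S j') 1 <= Af al s).
  { destruct j' as [|j''].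
    - change 1%nat with (S 0). rewrite c_Slast. simpl. rewrite Rplus_0_l. lra.
    - change 1%nat with (S 0). rewrite c_Smid by lia. simpl. rewrite Rplus_0_l. unfold Cf.
      pose proof (f3 al Hal s ltac:(pose proof s_range; lra)). lra. }
  assert (0 <= s ^ 2) by apply pow2_ge_0. nra.
Qed.

End CC.


Lemma sumR_last n f : sumR (S n) f = sumR n f + f n.
Proof. reflexivity. Qed.

Lemma peel n (p y : nat -> R) :
  sumR (S (S n)) (fun s => p (S n - s)%nat * (y (S s) - y s)) =
  sumR (S n) (fun s => p (S (n - s)) * (y (S s) - y s)) + p 0%nat * (y (S (S n)) - y (S n)).
Proof. rewrite sumR_last. replace (S n - S n)%nat with 0%nat by lia. f_equal.
  apply sumR_ext. intros k Hk. f_equal. f_equal. lia. Qed.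

Lemma GL n : forall (p y : nat -> R) A,
  (forall m, (m < n)%nat -> p (S m) <= p m) -> (forall k, (1 <= k <= n)%nat -> y k <= A) ->
  p 0%nat * y (S n) - (p 0%nat - p n) * A - p n * y 0%nat <= sumR (S n) (fun s => p (n - s)%nat * (y (S s) - y s)).
Proof. induction n; intros p y A Hp Hy.
  - simpl. lra.
  - rewrite peel. specialize (IHn (fun m => p (S m)) y A). cbv beta in IHn.
    assert (IH := IHn ltac:(intros; apply Hp; lia) ltac:(intros; apply Hy; lia)).
    assert (y (S n) <= A) by (apply Hy; lia). assert (p 1%nat <= p 0%nat) by (apply Hp; lia).
    assert ((p 0%nat - p 1%nat) * y (S n) <= (p 0%nat - p 1%nat) * A) by (apply Rmult_le_compat_l; lra).
    lra.
Qed.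

Lemma Alik n (p v : nat -> R) sg :
  1 / 2 <= sg <= 1 ->
  (forall m, (m < n)%nat -> p (S m) <= p m) -> 0 <= p n ->
  ((1 <= n)%nat -> sg ^ 2 * p 1%nat <= (2 * sg - 1) * p 0%nat) ->
  / 2 * sumR (S n) (fun s => p (n - s)%nat * (v (S s) ^ 2 - v s ^ 2)) <=
  (sg * v (S n) + (1 - sg) * v n) * sumR (S n) (fun s => p (n - s)%nat * (v (S s) - v s)).
Proof. intros Hs Hp Hn Hc. set (vs := sg * v (S n) + (1 - sg) * v n).
  set (y := fun k => - (v k - vs) ^ 2).
  assert (E : vs * sumR (S n) (fun s => p (n - s)%nat * (v (S s) - v s)) - / 2 * sumR (S n) (fun s => p (n - s)%nat * (v (S s) ^ 2 - v s ^ 2))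
    = / 2 * sumR (S n) (fun s => p (n - s)%nat * (y (S s) - y s))).
  { rewrite <- !sumR_scal, <- sumR_minus. apply sumR_ext. intros; unfold y; field. }
  assert (0 <= sumR (S n) (fun s => p (n - s)%nat * (y (S s) - y s))).
  { destruct n as [|n'].
    - simpl. unfold y, vs. replace (v 1%nat - (sg * v 1%nat + (1 - sg) * v 0%nat)) with ((1 - sg) * (v 1%nat - v 0%nat)) by ring.
      replace (v 0%nat - (sg * v 1%nat + (1 - sg) * v 0%nat)) with (- sg * (v 1%nat - v 0%nat)) by ring.
      match goal with |- 0 <= ?e => replace e with (p 0%nat * (2 * sg - 1) * (v 1%nat - v 0%nat) ^ 2) by ring end.
      apply Rmult_le_pos; [|apply pow2_ge_0]. apply Rmult_le_pos; lra.
    - rewrite peel. assert (G := GL n' (fun m => p (S m)) y 0 ltac:(intros; apply Hp; lia) ltac:(intros; unfold y; pose proof (pow2_ge_0 (v k - vs)); lra)).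
      cbv beta in G.
      assert (0 <= p (S n') * - y 0%nat) by (apply Rmult_le_pos; auto; unfold y; pose proof (pow2_ge_0 (v 0%nat - vs)); lra).
      specialize (Hc ltac:(lia)).
      unfold y, vs in *.
      replace (v (S (S n')) - (sg * v (S (S n')) + (1 - sg) * v (S n'))) with ((1 - sg) * (v (S (S n')) - v (S n'))) in * by ring.
      replace (v (S n') - (sg * v (S (S n')) + (1 - sg) * v (S n'))) with (- sg * (v (S (S n')) - v (S n'))) in * by ring.
      set (w := v (S (S n')) - v (S n')) in *.
      assert (0 <= w ^ 2 * ((2 * sg - 1) * p 0%nat - sg ^ 2 * p 1%nat)) by (apply Rmult_le_pos; [apply pow2_ge_0|lra]).
      nra. }
  lra.
Qed.


Lemma Gamma_pos al G2 : 0 < al < 1 -> is_Gamma (2 - al) G2 -> 0 < G2.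
Proof. intros Hal HG. set (g := fun s => Rpower s (2 - al - 1) * exp (- s)).
  set (eps := exp (- 2) / 2). assert (He : 0 < eps) by (unfold eps; pose proof (exp_pos (-2)); lra).
  destruct (HG eps He) as [del [L [Hdel H]]].
  set (c := Rmin (del / 2) (1 / 2)). set (d := Rmax L 2 + 1).
  assert (Hc : 0 < c < del) by (unfold c, Rmin; destruct (Rle_dec (del / 2) (1 / 2)); lra).
  assert (Hc1 : c < 1) by (unfold c, Rmin; destruct (Rle_dec (del / 2) (1 / 2)); lra).
  assert (Hd : L < d) by (unfold d; pose proof (Rmax_l L 2); lra).
  assert (Hd2 : 2 < d) by (unfold d; pose proof (Rmax_r L 2); lra).
  destruct (H c d Hc Hd ltac:(lra)) as [pr Hpr]. fold g in pr, Hpr.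
  assert (pr1 : Riemann_integrable g c 2) by (apply (@RiemannInt_P22 g c d 2 pr); lra).
  assert (pr2 : Riemann_integrable g 2 d) by (apply (@RiemannInt_P23 g c d 2 pr); lra).
  assert (pr3 : Riemann_integrable g c 1) by (apply (@RiemannInt_P22 g c 2 1 pr1); lra).
  assert (pr4 : Riemann_integrable g 1 2) by (apply (@RiemannInt_P23 g c 2 1 pr1); lra).
  assert (E1 := RiemannInt_P26 pr1 pr2 pr). assert (E2 := RiemannInt_P26 pr3 pr4 pr1).
  assert (Hg0 : forall x, 0 <= g x).
  { intros. unfold g. apply Rmult_le_pos; left; [apply Rpower_pos|apply exp_pos]. }
  assert (I2 : 0 <= RiemannInt pr2).
  { replace 0 with (0 * (d - 2)) by ring. rewrite <- (RiemannInt_P15 (RiemannInt_P14 2 d 0)). apply RiemannInt_P19. lra. intros; unfold fct_cte; auto. }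
  assert (I3 : 0 <= RiemannInt pr3).
  { replace 0 with (0 * (1 - c)) by ring. rewrite <- (RiemannInt_P15 (RiemannInt_P14 c 1 0)). apply RiemannInt_P19. lra. intros; unfold fct_cte; auto. }
  assert (I4 : exp (- 2) <= RiemannInt pr4).
  { replace (exp (-2)) with (exp (-2) * (2 - 1)) by ring. rewrite <- (RiemannInt_P15 (RiemannInt_P14 1 2 (exp (-2)))).
    apply RiemannInt_P19. lra. intros x Hx. unfold fct_cte, g.
    assert (Rpower 1 (2 - al - 1) <= Rpower x (2 - al - 1)) by (apply Rpower_incr; lra). rewrite Rpower_1_l in H0.
    assert (exp (-2) <= exp (- x)) by (left; apply exp_increasing; lra).
    pose proof (exp_pos (-2)). nra. }
  apply Rabs_def2 in Hpr. unfold eps in *. lra.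
Qed.


Lemma Delta_t_lin al tau G2 j v w :
  Delta_t al tau G2 j (fun s => v s - w s) = Delta_t al tau G2 j v - Delta_t al tau G2 j w.
Proof. unfold Delta_t. rewrite <- Rmult_minus_distr_l. f_equal. rewrite <- sumR_minus.
  apply sumR_ext; intros; ring. Qed.

Lemma Delta_t_sum al tau G2 j n (F : nat -> nat -> R) :
  Delta_t al tau G2 j (fun s => sumR n (fun k => F s k)) = sumR n (fun k => Delta_t al tau G2 j (fun s => F s k)).
Proof. unfold Delta_t. rewrite sumR_scal. f_equal.
  rewrite (sumR_ext _ _ (fun s => sumR n (fun k => ccoef al j (j - s) * (F (S s) k - F s k)))).
  apply sumR_swap. intros s _. rewrite <- sumR_minus, <- sumR_scal. auto. Qed.

Lemma delta_h_lin al be a b T gam dp dm N M j (z v w : nat -> R) i :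
  (forall k, z k = v k - w k) ->
  delta_h al be a b T gam dp dm N M j z i = delta_h al be a b T gam dp dm N M j v i - delta_h al be a b T gam dp dm N M j w i.
Proof. intros Hz. unfold delta_h. rewrite !Hz.
  assert (L : sumR (i + 2) (fun k => omega be k * z (i + 1 - k)%nat) = sumR (i + 2) (fun k => omega be k * v (i + 1 - k)%nat) - sumR (i + 2) (fun k => omega be k * w (i + 1 - k)%nat)).
  { rewrite <- sumR_minus. apply sumR_ext; intros; rewrite Hz; ring. }
  assert (R' : sumR (N - i + 2) (fun k => omega be k * z (i + k - 1)%nat) = sumR (N - i + 2) (fun k => omega be k * v (i + k - 1)%nat) - sumR (N - i + 2) (fun k => omega be k * w (i + k - 1)%nat)).
  { rewrite <- sumR_minus. apply sumR_ext; intros; rewrite Hz; ring. }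
  rewrite L, R'. unfold Rdiv. ring. Qed.

Fixpoint maxR (n : nat) (Y : nat -> R) : R :=
  match n with O => Y 0%nat | S n' => Rmax (maxR n' Y) (Y (S n')) end.

Lemma maxR_ge n Y m : (m <= n)%nat -> Y m <= maxR n Y.
Proof. induction n; intros Hm. replace m with 0%nat by lia. simpl; lra.
  simpl. destruct (Nat.eq_dec m (S n)) as [->|Hne]. apply Rmax_r.
  eapply Rle_trans. apply IHn; lia. apply Rmax_l. Qed.

Lemma maxR_att n Y : exists m, (m <= n)%nat /\ maxR n Y = Y m.
Proof. induction n. exists 0%nat; auto. destruct IHn as [m [Hm E]]. simpl. rewrite E.
  unfold Rmax. destruct (Rle_dec (Y m) (Y (S n))). exists (S n); auto. exists m; split; auto. Qed.

Lemma sq_convex sg x y : 0 <= sg <= 1 -> (sg * x + (1 - sg) * y) ^ 2 <= sg * x ^ 2 + (1 - sg) * y ^ 2.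
Proof. intros. assert (0 <= sg * (1 - sg) * (x - y) ^ 2) by (apply Rmult_le_pos; [nra|apply pow2_ge_0]). nra. Qed.

Lemma le_sqrt_of_sq P X : 0 <= X -> P ^ 2 <= X -> P <= sqrt X.
Proof. intros HX H. destruct (Rle_dec P 0). pose proof (sqrt_pos X); lra.
  rewrite <- (sqrt_pow2 P) by lra. apply sqrt_le_1_alt. auto. Qed.


Lemma c_chain al j : 0 < al < 1 -> forall m, (m <= j)%nat -> ccoef al j j <= ccoef al j m.
Proof. intros Hal. assert (forall d, (d <= j)%nat -> ccoef al j j <= ccoef al j (j - d)).
  { induction d; intros Hd. replace (j - 0)%nat with j by lia; lra.
    eapply Rle_trans. apply IHd; lia. replace (j - d)%nat with (S (j - S d)) by lia. apply c_mono; auto; lia. }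
  intros m Hm. replace m with (j - (j - m))%nat by lia. apply H; lia. Qed.

Lemma c_pos al j m : 0 < al < 1 -> (m <= j)%nat -> 0 < ccoef al j m.
Proof. intros Hal Hm. eapply Rlt_le_trans; [|apply c_chain; eauto]. eapply Rlt_le_trans; [|apply c_last_lb; auto].
  apply Rmult_lt_0_compat. lra. apply Rpower_pos. Qed.

Lemma space_neg al be a b T gam dp dm N M j (v : nat -> R) :
  1 < be < 2 -> (5 <= N)%nat -> v 0%nat = 0 -> v N = 0 -> a < b ->
  0 <= dp (tgs al T M j) -> 0 <= dm (tgs al T M j) ->
  sumR (N - 1) (fun k => v (S k) * delta_h al be a b T gam dp dm N M j v (S k)) <= 0.
Proof. intros Hb HN Hv0 HvN Hab Hdp Hdm. unfold delta_h.
  set (h := hstep a b N). set (ts := tgs al T M j).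
  assert (Hh : 0 < h). { unfold h, hstep. apply Rdiv_lt_0_compat. lra. apply lt_0_INR; lia. }
  assert (Hhb : 0 < Rpower h be) by apply Rpower_pos.
  rewrite (sumR_ext _ _ (fun k => gam ts / (2 * h) * (v (S k) * (v (S (S k)) - v (S k - 1)%nat))
     + dp ts / Rpower h be * (v (S k) * sumR (S k + 2) (fun q => omega be q * v (S k + 1 - q)%nat))
     + dm ts / Rpower h be * (v (S k) * sumR (N - S k + 2) (fun q => omega be q * v (S k + q - 1)%nat)))).
  2:{ intros; unfold Rdiv; ring. }
  rewrite !sumR_plus, !sumR_scal.
  rewrite (gamma_term N v HN Hv0 HvN).
  pose proof (left_term be N v Hb HN Hv0 HvN). pose proof (right_term be N v Hb HN Hv0 HvN).
  fold ts in Hdp, Hdm. assert (0 <= dp ts / Rpower h be) by (unfold Rdiv; apply Rmult_le_pos; [lra|left; apply Rinv_0_lt_compat; lra]).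
  assert (0 <= dm ts / Rpower h be) by (unfold Rdiv; apply Rmult_le_pos; [lra|left; apply Rinv_0_lt_compat; lra]).
  nra.
Qed.


Theorem theorem3 (alpha beta a b T : R) (gam dp dm : R -> R)
  (f : R -> R -> R) (phi : R -> R) (u : R -> R -> R) (dstar CR G2 : R) :
  0 < alpha < 1 -> 1 < beta < 2 -> a < b -> 0 < T ->
  (forall t, 0 <= t <= T -> 0 <= dp t /\ 0 <= dm t) ->
  0 < dstar -> (forall t, 0 <= t <= T -> dstar <= dp t + dm t) ->
  solves_problem alpha beta a b T gam dp dm f phi u ->
  is_Gamma (2 - alpha) G2 ->
  (forall (N M j i : nat), (5 <= N)%nat -> (1 <= M)%nat -> (j < M)%nat ->
     (1 <= i <= N - 1)%nat ->
     Rabs (trunc_err alpha beta a b T gam dp dm f u G2 N M j i)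
       <= CR * (tstep T M ^ 2 + hstep a b N ^ 2)) ->
  exists ct, 0 < ct /\
    forall (N M : nat) (U : nat -> nat -> R),
      (5 <= N)%nat -> (1 <= M)%nat ->
      scheme_solution alpha beta a b T gam dp dm f phi G2 N M U ->
      forall j, (j <= M)%nat ->
        gnorm (hstep a b N) N (fun i => u (xg a b N i) (tg T M j) - U j i)
          <= ct * (tstep T M ^ 2 + hstep a b N ^ 2).
Proof.
  intros Hal Hbe Hab HT Hd Hds Hds2 Hsol HG HR.
  assert (G2pos : 0 < G2) by (eapply Gamma_pos; eauto).
  set (K := G2 * Rpower T alpha / (1 - alpha)).
  assert (HK : 0 <= K).
  { unfold K. apply Rmult_le_pos. apply Rmult_le_pos; [lra|left; apply Rpower_pos]. left; apply Rinv_0_lt_compat; lra. }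
  exists (2 * K * sqrt (b - a) * Rabs CR + 1). split.
  { assert (0 <= 2 * K * sqrt (b - a) * Rabs CR).
    { apply Rmult_le_pos; [|apply Rabs_pos]. apply Rmult_le_pos; [lra|apply sqrt_pos]. } lra. }
  intros N M U HN HM Hsch j Hj.
  destruct Hsol as [Hinit [Hbd Hpde]].
  destruct Hsch as [Uinit [Ubd Ueq]].
  set (sg := sig alpha).
  assert (Hsg : 1 / 2 < sg < 1) by (unfold sg, sig; lra).
  set (h := hstep a b N). set (tau := tstep T M).
  assert (HNpos : 0 < INR N) by (apply lt_0_INR; lia).
  assert (HMpos : 0 < INR M) by (apply lt_0_INR; lia).
  assert (Hh : 0 < h) by (unfold h, hstep; apply Rdiv_lt_0_compat; lra).
  assert (Htau : 0 < tau) by (unfold tau, tstep; apply Rdiv_lt_0_compat; lra).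
  assert (HhN : h * INR N = b - a) by (unfold h, hstep; field; lra).
  assert (HtM : tau * INR M = T) by (unfold tau, tstep; field; lra).
  set (E := fun s i => u (xg a b N i) (tg T M s) - U s i).
  set (Y := fun s => sumR (N - 1) (fun k => E s (S k) ^ 2)).
  set (B := CR * (tau ^ 2 + h ^ 2)).
  assert (HB : 0 <= B).
  { pose proof (HR N M 0%nat 1%nat HN HM ltac:(lia) ltac:(lia)). pose proof (Rabs_pos (trunc_err alpha beta a b T gam dp dm f u G2 N M 0 1)).
    unfold B, tau, h. lra. }
  assert (Htg : forall s, (s <= M)%nat -> 0 <= tg T M s <= T).
  { intros s Hs. unfold tg. fold tau. split. apply Rmult_le_pos; [apply pos_INR|lra].
    rewrite <- HtM. assert (INR s <= INR M) by (apply le_INR; auto). nra. }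
  assert (Hx0 : xg a b N 0 = a) by (unfold xg; simpl; ring).
  assert (HxN : xg a b N N = b) by (unfold xg; fold h; lra).
  assert (Hxi : forall i, (1 <= i <= N - 1)%nat -> a < xg a b N i < b).
  { intros i Hi. unfold xg. fold h. assert (1 <= INR i) by (replace 1 with (INR 1) by auto; apply le_INR; lia).
    assert (INR i <= INR N - 1) by (replace 1 with (INR 1) by auto; rewrite <- minus_INR by lia; apply le_INR; lia). nra. }
  assert (Ebd : forall s, (s <= M)%nat -> E s 0%nat = 0 /\ E s N = 0).
  { intros s Hs. destruct (Hbd (tg T M s) (Htg s Hs)) as [H1 H2]. destruct (Ubd s Hs) as [H3 H4].
    unfold E. rewrite Hx0, HxN, H1, H2, H3, H4. lra. }
  assert (E0 : forall i, (1 <= i <= N - 1)%nat -> E 0%nat i = 0).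
  { intros i Hi. unfold E. rewrite Uinit by auto. unfold tg. simpl INR. rewrite Rmult_0_l.
    rewrite Hinit by (apply Hxi; auto). ring. }
  assert (Y0 : Y 0%nat = 0).
  { unfold Y. rewrite (sumR_ext _ _ (fun _ => 0)). rewrite sumR_const; ring.
    intros k Hk. rewrite E0 by lia. simpl; ring. }
  assert (HYnn : forall s, 0 <= Y s) by (intros; apply sumR_nonneg; intros; apply pow2_ge_0).
  set (W := maxR M Y).
  assert (HW : forall s, (s <= M)%nat -> Y s <= W) by (intros; apply maxR_ge; auto).
  assert (HW0 : 0 <= W) by (rewrite <- Y0; apply HW; lia).
  set (D := 2 * (sqrt W * (sqrt (INR (N - 1)) * B))).
  assert (HD : 0 <= D).
  { unfold D. apply Rmult_le_pos; [lra|]. apply Rmult_le_pos; [apply sqrt_pos|]. apply Rmult_le_pos; [apply sqrt_pos|lra]. }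
  set (cst := Rpower tau (- alpha) / G2).
  assert (Hcst : 0 < cst) by (unfold cst; apply Rdiv_lt_0_compat; [apply Rpower_pos|lra]).
  assert (Key : forall jj, (jj < M)%nat -> Delta_t alpha tau G2 jj Y <= D).
  { intros jj Hjj.
    set (es := fun k => sg * E (S jj) k + (1 - sg) * E jj k).
    set (Rt := fun i => trunc_err alpha beta a b T gam dp dm f u G2 N M jj i).
    assert (errEq : forall i, (1 <= i <= N - 1)%nat ->
      Delta_t alpha tau G2 jj (fun s => E s i) = delta_h alpha beta a b T gam dp dm N M jj es i + Rt i).
    { intros i Hi. unfold E. rewrite Delta_t_lin.
      rewrite (delta_h_lin alpha beta a b T gam dp dm N M jj es
        (fun k => sig alpha * u (xg a b N k) (tg T M (S jj)) + (1 - sig alpha) * u (xg a b N k) (tg T M jj))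
        (fun k => sig alpha * U (S jj) k + (1 - sig alpha) * U jj k)).
      2:{ intros k. unfold es, E, sg. ring. }
      pose proof (Ueq jj i Hjj Hi) as Hu. fold tau in Hu. rewrite Hu. unfold Rt, trunc_err. fold tau. lra. }
    assert (Hpt : forall i, (1 <= i <= N - 1)%nat ->
       / 2 * Delta_t alpha tau G2 jj (fun s => E s i ^ 2) <= es i * (delta_h alpha beta a b T gam dp dm N M jj es i + Rt i)).
    { intros i Hi. rewrite <- errEq by auto. unfold Delta_t. fold cst.
      assert (A := Alik jj (ccoef alpha jj) (fun s => E s i) sg ltac:(lra)
        (fun m Hm => c_mono alpha Hal jj m Hm)
        ltac:(left; apply c_pos; auto)
        ltac:(intros H1; pose proof (c_alik alpha Hal jj H1); fold sg in H; replace (2 * sg - 1) with (1 - alpha) by (unfold sg, sig; field); lra)).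
      cbv beta in A. unfold es. nra. }
    assert (Hsum : / 2 * Delta_t alpha tau G2 jj Y <=
       sumR (N - 1) (fun k => es (S k) * delta_h alpha beta a b T gam dp dm N M jj es (S k)) + sumR (N - 1) (fun k => es (S k) * Rt (S k))).
    { unfold Y. rewrite Delta_t_sum, <- sumR_scal, <- sumR_plus. apply sumR_le. intros k Hk.
      eapply Rle_trans. apply (Hpt (S k)); lia. right; ring. }
    assert (Hts : 0 <= tgs alpha T M jj <= T).
    { unfold tgs. fold tau sg. split. apply Rmult_le_pos; [pose proof (pos_INR jj); lra|lra].
      rewrite <- HtM. assert (INR jj + 1 <= INR M) by (rewrite <- S_INR; apply le_INR; lia). nra. }
    assert (Hsp : sumR (N - 1) (fun k => es (S k) * delta_h alpha beta a b T gam dp dm N M jj es (S k)) <= 0).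
    { destruct (Hd _ Hts). apply space_neg; auto.
      - unfold es. destruct (Ebd (S jj) ltac:(lia)), (Ebd jj ltac:(lia)). rewrite H1, H3. ring.
      - unfold es. destruct (Ebd (S jj) ltac:(lia)), (Ebd jj ltac:(lia)). rewrite H2, H4. ring. }
    assert (Hes : sumR (N - 1) (fun k => es (S k) ^ 2) <= W).
    { apply Rle_trans with (sg * Y (S jj) + (1 - sg) * Y jj).
      - unfold Y. rewrite <- !sumR_scal, <- sumR_plus. apply sumR_le. intros k Hk. unfold es. apply sq_convex. lra.
      - pose proof (HW (S jj) ltac:(lia)). pose proof (HW jj ltac:(lia)). nra. }
    assert (HRt : sumR (N - 1) (fun k => Rt (S k) ^ 2) <= INR (N - 1) * B ^ 2).
    { rewrite <- sumR_const. apply sumR_le. intros k Hk.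
      pose proof (HR N M jj (S k) HN HM Hjj ltac:(lia)). fold tau h B in H. unfold Rt.
      rewrite <- (pow2_abs (trunc_err _ _ _ _ _ _ _ _ _ _ _ _ _ _ _)). pose proof (Rabs_pos (trunc_err alpha beta a b T gam dp dm f u G2 N M jj (S k))). nra. }
    assert (HCS : sumR (N - 1) (fun k => es (S k) * Rt (S k)) <= sqrt W * (sqrt (INR (N - 1)) * B)).
    { apply le_sqrt_of_sq in Hes || idtac.
      assert (X := sumR_CS (N - 1) (fun k => es (S k)) (fun k => Rt (S k))). cbv beta in X.
      assert (0 <= sumR (N - 1) (fun k => es (S k) ^ 2)) by (apply sumR_nonneg; intros; apply pow2_ge_0).
      assert (0 <= sumR (N - 1) (fun k => Rt (S k) ^ 2)) by (apply sumR_nonneg; intros; apply pow2_ge_0).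
      apply le_sqrt_of_sq in X; [|apply Rmult_le_pos; auto].
      eapply Rle_trans. apply X. rewrite sqrt_mult by auto.
      apply Rmult_le_compat; try apply sqrt_pos. apply sqrt_le_1_alt; auto.
      rewrite <- (sqrt_pow2 B) by auto. rewrite <- sqrt_mult by (auto using pos_INR, pow2_ge_0). apply sqrt_le_1_alt; auto. }
    unfold D. lra. }
  (* Gronwall *)
  assert (Gr : forall m, (m <= M)%nat -> forall k, (k <= m)%nat -> Y k <= K * D).
  { induction m; intros Hm k Hk.
    - replace k with 0%nat by lia. rewrite Y0. apply Rmult_le_pos; auto.
    - destruct (Nat.eq_dec k (S m)) as [->|Hne]; [|apply IHm; lia].
      assert (IH := IHm ltac:(lia)).
      assert (G := GL m (ccoef alpha m) Y (K * D) (fun q Hq => c_mono alpha Hal m q Hq) ltac:(intros; apply IH; lia)).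
      rewrite Y0, Rmult_0_r, Rminus_0_r in G.
      pose proof (Key m ltac:(lia)) as Km. unfold Delta_t in Km. fold cst in Km.
      set (Sm := sumR (S m) (fun s => ccoef alpha m (m - s) * (Y (S s) - Y s))) in *.
      assert (HSm : Sm <= G2 * Rpower tau alpha * D).
      { assert (Rpower tau alpha * Rpower tau (- alpha) = 1).
        { rewrite <- Rpower_plus. replace (alpha + - alpha) with 0 by ring. apply Rpower_O; auto. }
        unfold cst in Km. apply Rmult_le_compat_l with (r := G2 * Rpower tau alpha) in Km.
        replace (G2 * Rpower tau alpha * (Rpower tau (- alpha) / G2 * Sm)) with (Sm * (Rpower tau alpha * Rpower tau (- alpha))) in Km by (field; lra).
        rewrite H, Rmult_1_r in Km. auto.
        apply Rmult_le_pos; [lra|left; apply Rpower_pos]. }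
      assert (Hcm : G2 * Rpower tau alpha * D <= ccoef alpha m m * (K * D)).
      { pose proof (c_last_lb alpha Hal m).
        assert (Hm1 : 0 < INR m + 1) by (pose proof (pos_INR m); lra).
        assert (Rpower tau alpha * Rpower (INR m + 1) alpha <= Rpower T alpha).
        { rewrite Rpower_mult_distr by lra. apply Rpower_incr; [|lra]. split. nra. rewrite <- HtM.
          assert (INR m + 1 <= INR M) by (rewrite <- S_INR; apply le_INR; lia). nra. }
        assert (Hxy : Rpower (INR m + 1) (- alpha) * Rpower (INR m + 1) alpha = 1).
        { rewrite <- Rpower_plus. replace (- alpha + alpha) with 0 by ring. apply Rpower_O; auto. }
        assert (G2 * Rpower tau alpha <= (1 - alpha) * Rpower (INR m + 1) (- alpha) * K).
        { unfold K. replace ((1 - alpha) * Rpower (INR m + 1) (- alpha) * (G2 * Rpower T alpha / (1 - alpha))) with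
            (G2 * (Rpower (INR m + 1) (- alpha) * Rpower T alpha)) by (field; lra).
          apply Rmult_le_compat_l; [lra|].
          pose proof (Rpower_pos (INR m + 1) (- alpha)).
          replace (Rpower tau alpha) with (Rpower (INR m + 1) (- alpha) * (Rpower tau alpha * Rpower (INR m + 1) alpha)).
          apply Rmult_le_compat_l; lra.
          transitivity (Rpower tau alpha * (Rpower (INR m + 1) (- alpha) * Rpower (INR m + 1) alpha)). ring.
          rewrite Hxy. ring. }
        assert (G2 * Rpower tau alpha <= ccoef alpha m m * K) by nra. nra. }
      assert (Hc0 : 0 < ccoef alpha m 0) by (apply c_pos; auto; lia).
      assert (ccoef alpha m 0 * Y (S m) <= ccoef alpha m 0 * (K * D)) by lra.
      apply Rmult_le_reg_l in H; auto. }
  destruct (maxR_att M Y) as [m0 [Hm0 Em0]]. fold W in Em0.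
  assert (HWb : W <= K * D) by (rewrite Em0; apply (Gr M (le_n M)); auto).
  set (q := sqrt W).
  assert (Hq : 0 <= q) by apply sqrt_pos.
  assert (HqW : q * q = W) by (apply sqrt_sqrt; auto).
  assert (Hqb : q <= 2 * K * (sqrt (INR (N - 1)) * B)).
  { unfold D in HWb. fold q in HWb.
    assert (0 <= 2 * K * (sqrt (INR (N - 1)) * B)) by (apply Rmult_le_pos; [lra|apply Rmult_le_pos; [apply sqrt_pos|lra]]).
    destruct (Req_dec q 0) as [->|Hq0]; [lra|].
    assert (q * q <= q * (2 * K * (sqrt (INR (N - 1)) * B))) by nra.
    apply Rmult_le_reg_l in H0; lra. }
  unfold gnorm. fold h. change (fun i => u (xg a b N i) (tg T M j) - U j i) with (E j).
  change (sumR (N - 1) (fun k => E j (S k) ^ 2)) with (Y j).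
  assert (sqrt (h * Y j) <= sqrt h * q).
  { unfold q. rewrite <- sqrt_mult by (auto; lra). apply sqrt_le_1_alt. apply Rmult_le_compat_l; [lra|]. apply HW; auto. }
  assert (sqrt h * sqrt (INR (N - 1)) <= sqrt (b - a)).
  { rewrite <- sqrt_mult by (auto using pos_INR; lra). apply sqrt_le_1_alt. rewrite <- HhN.
    apply Rmult_le_compat_l; [lra|]. apply le_INR; lia. }
  assert (B <= Rabs CR * (tau ^ 2 + h ^ 2)).
  { unfold B. apply Rmult_le_compat_r. nra. apply Rle_abs. }
  fold tau h. pose proof (sqrt_pos h). pose proof (sqrt_pos (INR (N - 1))). pose proof (sqrt_pos (b - a)).
  assert (sqrt h * q <= 2 * K * B * (sqrt h * sqrt (INR (N - 1)))).
  { replace (2 * K * B * (sqrt h * sqrt (INR (N - 1)))) with (sqrt h * (2 * K * (sqrt (INR (N - 1)) * B))) by ring.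
    apply Rmult_le_compat_l; auto. }
  assert (2 * K * B * (sqrt h * sqrt (INR (N - 1))) <= 2 * K * B * sqrt (b - a)).
  { apply Rmult_le_compat_l; auto. apply Rmult_le_pos; [lra|auto]. }
  assert (2 * K * B * sqrt (b - a) <= 2 * K * sqrt (b - a) * (Rabs CR * (tau ^ 2 + h ^ 2))).
  { replace (2 * K * B * sqrt (b - a)) with (2 * K * sqrt (b - a) * B) by ring.
    apply Rmult_le_compat_l; auto. apply Rmult_le_pos; [lra|auto]. }
  assert (0 <= tau ^ 2 + h ^ 2) by nra.
  change (sqrt (h * Y j) <= (2 * K * sqrt (b - a) * Rabs CR + 1) * (tau ^ 2 + h ^ 2)). nra.
Qed.
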